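(* (1) The map $\rho$ (resp. $\eta$, $\tau$) equals the composition of the maps $\rho_a^b$ (resp. $\eta_a^b$, $\tau_a^b$) taken along any linear extension of the coordinatewise partial order on $[m]\times[n]$ (i.e. for any ordering $(a_1,b_1),\dots,(a_{mn},b_{mn})$ of $[m]\times[n]$ in which $(a,b)$ precedes $(a',b')$ whenever $a\le a'$, $b\le b'$, $(a,b)\ne(a',b')$, we have $\rho=\rho_{a_{mn}}^{b_{mn}}\circ\dots\circ\rho_{a_1}^{b_1}$, and similarly for $\eta,\tau$). (2) $\rho=\tau\circ\eta$.
   Context: For $\mathbf{x}=(x_a^b)\in\mathrm{Mat}_{m\times n}(\mathbb{C}^* )$ define $\mathrm{gMax}_a^b(\mathbf{x})=\frac{x_a^{b-1}x_{a-1}^b}{x_a^{b-1}+x_{a-1}^b}$ if $a,b>1$; $x_1^{b-1}$ if $a=1<b$; $x_{a-1}^1$ if $b=1<a$; $1$ if $a=b=1$. Define $\mathrm{gMin}_a^b(\mathbf{x})=x_{a+1}^b+x_a^{b+1}$ if $a<m,b<n$; $x_m^{b+1}$ if $a=m,b<n$; $x_{a+1}^n$ if $a<m,b=n$; $1$ if $a=m,b=n$. The rational maps $\eta_a^b,T_a^b$ change only the entry $x_a^b$: $\eta_a^b:x_a^b\mapsto x_a^b\,\mathrm{gMax}_a^b(\mathbf{x})$, $T_a^b:x_a^b\mapsto\frac{1}{x_a^b}\mathrm{gMax}_a^b(\mathbf{x})\mathrm{gMin}_a^b(\mathbf{x})$. Let $\tau_a^b=T_1^{b-a+1}\circ\dots\circ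 T_{a-2}^{b-2}\circ T_{a-1}^{b-1}$ if $a\le b$ and $\tau_a^b=T_{a-b+1}^1\circ\dots\circ T_{a-2}^{b-2}\circ T_{a-1}^{b-1}$ if $a\ge b$ (the identity if $a=1$ or $b=1$), and $\rho_a^b=\tau_a^b\circ\eta_a^b$. Define $\rho=(\rho_m^n\circ\dots\circ\rho_m^1)\circ\dots\circ(\rho_1^n\circ\dots\circ\rho_1^1)$, and $\eta,\tau$ the same way with $\rho_a^b$ replaced by $\eta_a^b$, resp. $\tau_a^b$. *)

(* Defs.v *)
(* Rational maps on Mat_{m x n} are modelled as maps on
   matrices over an arbitrary field (total inverse); equality of rational
   maps is stated by evaluating at the generic matrix over the field of
   rational functions C(x_a^b). *)
From HB Require Import structures.
From mathcomp Require Import all_boot all_order all_algebra.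
From mathcomp Require Import algC.
From mathcomp Require Import fraction.
From mathcomp Require Import mpoly.
Set Implicit Arguments. Unset Strict Implicit. Unset Printing Implicit Defensive.
Import GRing.Theory.
Local Open Scope ring_scope.

Section Maps.
Variables (K : fieldType) (m n : nat).
Notation M := 'M[K]_(m, n).

(* entry x_a^b with 1-based indices a in [1,m], b in [1,n] (0 outside) *)
Definition ent (x : M) (a b : nat) : K :=
  match @insub nat (fun i => (i < m)%N) (ordinal m) a.-1,
        @insub nat (fun j => (j < n)%N) (ordinal n) b.-1 with
  | Some i, Some j => x i j
  | _, _ => 0
  end.

Definition upd (x : M) (a b : nat) (v : K) : M :=
  \matrix_(i < m, j < n) if ((i.+1 == a) && (j.+1 == b))%N then v else x i j.

Definition gMax (x : M) (a b : nat) : K :=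
  if ((1 < a) && (1 < b))%N then
    ent x a (b.-1) * ent x a.-1 b / (ent x a (b.-1) + ent x a.-1 b)
  else if ((a == 1) && (1 < b))%N then ent x 1 b.-1
  else if ((b == 1) && (1 < a))%N then ent x a.-1 1
  else 1.

Definition gMin (x : M) (a b : nat) : K :=
  if ((a < m) && (b < n))%N then ent x a.+1 b + ent x a b.+1
  else if ((a == m) && (b < n))%N then ent x m b.+1
  else if ((a < m) && (b == n))%N then ent x a.+1 n
  else 1.

Definition eta_ab (a b : nat) (x : M) : M :=
  upd x a b (ent x a b * gMax x a b).

Definition T_ab (a b : nat) (x : M) : M :=
  upd x a b ((ent x a b)^-1 * gMax x a b * gMin x a b).

(* tau_a^b = T_{a-k}^{b-k} o ... o T_{a-1}^{b-1}, k = min(a,b) - 1;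
   T_{a-1}^{b-1} is applied first. Identity if a = 1 or b = 1. *)
Definition tau_ab (a b : nat) (x : M) : M :=
  foldl (fun y i => T_ab (a - i) (b - i) y) x (iota 1 (minn a b).-1).

Definition rho_ab (a b : nat) (x : M) : M := tau_ab a b (eta_ab a b x).

Definition compose_along (f : nat -> nat -> M -> M) (s : seq (nat * nat)) (x : M) : M :=
  foldl (fun y p => f p.1 p.2 y) x s.

Definition rowmajor : seq (nat * nat) :=
  [seq (a, b) | a <- iota 1 m, b <- iota 1 n].

Definition rho_map := compose_along rho_ab rowmajor.
Definition eta_map := compose_along eta_ab rowmajor.
Definition tau_map := compose_along tau_ab rowmajor.

End Maps.

Definition linear_extension (m n : nat) (s : seq (nat * nat)) : Prop :=
  perm_eq s (rowmajor m n) /\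
  forall i j, (i < size s)%N -> (j < size s)%N ->
    let p := nth (0, 0)%N s i in let q := nth (0, 0)%N s j in
    (p.1 <= q.1)%N -> (p.2 <= q.2)%N -> p != q -> (i < j)%N.

Definition ratfun (m n : nat) := {fraction {mpoly algC[m * n]}}.

Definition generic_matrix (m n : nat) : 'M[ratfun m n]_(m, n) :=
  \matrix_(i < m, j < n) (@FracField.tofrac {mpoly algC[m * n]} 'X_(mxvec_index i j)).

(* Main.v *)
Require Import Defs.
From HB Require Import structures.
From mathcomp Require Import all_boot all_order all_algebra.
From mathcomp Require Import algC fraction mpoly.
From mathcomp Require Import zify.
Set Implicit Arguments. Unset Strict Implicit. Unset Printing Implicit Defensive.
Import GRing.Theory.
Local Open Scope ring_scope.

Section Loc.
Variables (K : fieldType) (m n : nat).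
Notation M := 'M[K]_(m, n).

Definition dist (c d : nat * nat) : nat :=
  (c.1 - d.1) + (d.1 - c.1) + (c.2 - d.2) + (d.2 - c.2).

Definition near (c : nat * nat) (i : 'I_m) (j : 'I_n) : Prop :=
  (dist (i.+1, j.+1) c <= 1)%N.

Definition local (f : M -> M) (c : nat * nat) : Prop :=
  exists g : M -> K, (forall x, f x = upd x c.1 c.2 (g x)) /\
    forall x y : M, (forall i j, near c i j -> x i j = y i j) -> g x = g y.

Lemma ent_dep (x y : M) p q :
  (forall (i : 'I_m) (j : 'I_n), i.+1 = p -> j.+1 = q -> x i j = y i j) ->
  (1 <= p)%N -> (1 <= q)%N -> ent x p q = ent y p q.
Proof.
move=> H hp hq; rewrite /ent.
case: insubP => [i _ Ei|//]; case: insubP => [j _ Ej|//].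
by apply: H; [rewrite Ei; lia | rewrite Ej; lia].
Qed.

Lemma ent_near (x y : M) c p q :
  (forall i j, near c i j -> x i j = y i j) ->
  (1 <= p)%N -> (1 <= q)%N -> (dist (p, q) c <= 1)%N -> ent x p q = ent y p q.
Proof.
move=> H hp hq hd; apply: ent_dep => // i j Ei Ej; apply: H.
by rewrite /near -Ei -Ej in hd.
Qed.

Lemma local_eta a b : (1 <= a)%N -> (1 <= b)%N -> local (eta_ab a b) (a, b).
Proof.
move=> ha hb; exists (fun x => ent x a b * gMax x a b); split => // x y H.
have E := fun p q => @ent_near x y (a, b) p q H.
rewrite /gMax /dist /= in E *.
rewrite (E a b) //; last lia.
case: ifP => [/andP[h1 h2]|_].
  by rewrite (E a b.-1) ?(E a.-1 b) //; lia.
case: ifP => [/andP[/eqP h1 h2]|_].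
  by rewrite (E 1%N b.-1) //; lia.
case: ifP => [/andP[/eqP h1 h2]|_] //.
by rewrite (E a.-1 1%N) //; lia.
Qed.

Lemma local_T a b : (1 <= a)%N -> (1 <= b)%N -> local (T_ab a b) (a, b).
Proof.
move=> ha hb; exists (fun x => (ent x a b)^-1 * gMax x a b * gMin x a b); split => // x y H.
have E := fun p q => @ent_near x y (a, b) p q H.
rewrite /gMax /gMin /dist /= in E *.
rewrite (E a b) //; last lia.
congr (_ * _ * _).
- case: ifP => [/andP[h1 h2]|_].
    by rewrite (E a b.-1) ?(E a.-1 b) //; lia.
  case: ifP => [/andP[/eqP h1 h2]|_].
    by rewrite (E 1%N b.-1) //; lia.
  case: ifP => [/andP[/eqP h1 h2]|_] //.
  by rewrite (E a.-1 1%N) //; lia.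
- case: ifP => [/andP[h1 h2]|_].
    by rewrite (E a.+1 b) ?(E a b.+1) //; lia.
  case: ifP => [/andP[/eqP h1 h2]|_].
    by rewrite (E m b.+1) //; lia.
  case: ifP => [/andP[h1 /eqP h2]|_] //.
  by rewrite (E a.+1 n) //; lia.
Qed.

Lemma local_comm f h c1 c2 d1 d2 : local f (c1, c2) -> local h (d1, d2) ->
  (1 <= c1)%N -> (1 <= c2)%N -> (1 <= d1)%N -> (1 <= d2)%N ->
  (2 <= dist (c1, c2) (d1, d2))%N -> forall x, f (h x) = h (f x).
Proof.
case=> gf [Ef Hf] [gh [Eh Hh]] h1 h2 h3 h4 hd x.
rewrite Ef Eh (Ef x) (Eh (upd _ _ _ _)) /=.
rewrite /dist /= in hd.
have -> : gf (upd x d1 d2 (gh x)) = gf x.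
  apply: Hf => i j; rewrite /near /dist mxE /=.
  by case: ifP => // /andP[/eqP e1 /eqP e2]; rewrite e1 e2; lia.
have -> : gh (upd x c1 c2 (gf x)) = gh x.
  apply: Hh => i j; rewrite /near /dist mxE /=.
  by case: ifP => // /andP[/eqP e1 /eqP e2]; rewrite e1 e2; lia.
apply/matrixP => i j; rewrite !mxE.
case: ifP => [/andP[/eqP e1 /eqP e2]|] //; case: ifP => [/andP[/eqP e3 /eqP e4]|] //.
move: hd; rewrite -e1 -e2 -e3 -e4; lia.
Qed.


Fixpoint allp {Y} (Q : Y -> Prop) (s : seq Y) : Prop :=
  if s is y :: s' then Q y /\ allp Q s' else True.

Lemma allp_cat {Y} (Q : Y -> Prop) s1 s2 : allp Q s1 -> allp Q s2 -> allp Q (s1 ++ s2).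
Proof. by elim: s1 => //= y s1 IH [? ?] ?; split => //; apply: IH. Qed.

Lemma allp_imp {Y} (Q Q' : Y -> Prop) s : allp Q s -> (forall y, Q y -> Q' y) -> allp Q' s.
Proof. by elim: s => //= y s IH [? ?] H; split; [apply: H | apply: IH]. Qed.

Lemma allp_map {Y} (Q : Y -> Prop) (f : nat -> Y) (s : seq nat) :
  (forall i, i \in s -> Q (f i)) -> allp Q (map f s).
Proof.
elim: s => //= i s IH H; split; first by apply: H; rewrite inE eqxx.
by apply: IH => j hj; apply: H; rewrite inE hj orbT.
Qed.

Definition run (L : seq ((nat * nat) * (M -> M))) (x : M) : M :=
  foldl (fun y t => t.2 y) x L.

Definition goodL (L : seq ((nat * nat) * (M -> M))) :=
  allp (fun t => local t.2 t.1 /\ (1 <= t.1.1)%N /\ (1 <= t.1.2)%N) L.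

Lemma run_comm1 f c L : local f c -> (1 <= c.1)%N -> (1 <= c.2)%N -> goodL L ->
  allp (fun t => (2 <= dist c t.1)%N) L -> forall x, f (run L x) = run L (f x).
Proof.
move=> hf h1 h2; elim: L => //= t L IH [[ht [h3 h4]] hL] [hd hD] x.
rewrite /run /= -/(run L _) -/(run L _) IH //; congr (run L _).
clear IH hD hL; move: hf ht hd h1 h2 h3 h4; case: c => c1 c2; case: t => [[d1 d2] g] /= hf ht hd h1 h2 h3 h4.
exact: (local_comm hf ht).
Qed.

Lemma run_comm L1 L2 : goodL L1 -> goodL L2 ->
  allp (fun t => allp (fun u => (2 <= dist t.1 u.1)%N) L2) L1 ->
  forall x, run L1 (run L2 x) = run L2 (run L1 x).
Proof.
move=> + h2; elim: L1 => //= t L1 IH [[ht [h3 h4]] hL] [hd hD] x.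
rewrite /run /= -/(run L1 _) -/(run L1 _) (run_comm1 ht) //; exact: IH.
Qed.

Definition eta_prog a b : seq ((nat * nat) * (M -> M)) := [:: ((a, b), eta_ab a b)].
Definition tau_prog a b : seq ((nat * nat) * (M -> M)) :=
  [seq ((a - i, b - i)%N, T_ab (a - i) (b - i)) | i <- iota 1 (minn a b).-1].
Definition rho_prog a b := eta_prog a b ++ tau_prog a b.

Lemma run_eta a b x : run (eta_prog a b) x = eta_ab a b x.
Proof. by []. Qed.
Lemma run_tau a b x : run (tau_prog a b) x = tau_ab a b x.
Proof.
rewrite /run /tau_prog /tau_ab; elim: (iota _ _) x => //= i s IH x; exact: IH.
Qed.
Lemma run_rho a b x : run (rho_prog a b) x = rho_ab a b x.
Proof. by rewrite /run /rho_prog foldl_cat -/(run _ _) -/(run _ _) run_tau. Qed.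

Definition diagc a b (c : nat * nat) : Prop :=
  (c.1 + b = c.2 + a)%N /\ (1 <= c.1)%N /\ (1 <= c.2)%N /\ (c.1 <= a)%N /\ (c.2 <= b)%N.
Definition diags a b (c : nat * nat) : Prop :=
  (c.1 + b = c.2 + a)%N /\ (1 <= c.1)%N /\ (1 <= c.2)%N /\ (c.1 < a)%N /\ (c.2 < b)%N.

Lemma tau_prog_info a b : goodL (tau_prog a b) /\ allp (fun t => diags a b t.1) (tau_prog a b).
Proof.
split; apply: allp_map => i; rewrite mem_iota => /andP[h1 h2] /=.
  have ha : (1 <= a - i)%N by lia.
  have hb : (1 <= b - i)%N by lia.
  by split => //; apply: local_T.
rewrite /diags /=; lia.
Qed.

Lemma eta_prog_info a b : (1 <= a)%N -> (1 <= b)%N ->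
  goodL (eta_prog a b) /\ allp (fun t => diagc a b t.1) (eta_prog a b).
Proof.
move=> ha hb; split => /=; split => //; first by split => //; apply: local_eta.
rewrite /diagc /=; lia.
Qed.

Lemma rho_prog_info a b : (1 <= a)%N -> (1 <= b)%N ->
  goodL (rho_prog a b) /\ allp (fun t => diagc a b t.1) (rho_prog a b).
Proof.
move=> ha hb; have [g1 d1] := eta_prog_info ha hb; have [g2 d2] := tau_prog_info a b.
split; apply: allp_cat => //; apply: (allp_imp d2) => t; rewrite /diags /diagc; lia.
Qed.

Lemma far_diag (L1 L2 : seq ((nat * nat) * (M -> M))) a b c d :
  allp (fun t => diagc a b t.1) L1 -> allp (fun t => diagc c d t.1) L2 ->
  (a + d + 2 <= b + c)%N ->
  allp (fun t => allp (fun u => (2 <= dist t.1 u.1)%N) L2) L1.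
Proof.
move=> h1 h2 h; apply: (allp_imp h1) => t ht; apply: (allp_imp h2) => u hu.
move: ht hu; rewrite /diagc /dist; lia.
Qed.

Definition progs (k : nat) a b :=
  if k is 0 then rho_prog a b else if k is 1 then eta_prog a b else tau_prog a b.

Lemma progs_info k a b : (1 <= a)%N -> (1 <= b)%N ->
  goodL (progs k a b) /\ allp (fun t => diagc a b t.1) (progs k a b).
Proof.
move=> ha hb; case: k => [|[|k]] /=; [exact: rho_prog_info | exact: eta_prog_info|].
have [g d] := tau_prog_info a b; split => //; apply: (allp_imp d) => t; rewrite /diags /diagc; lia.
Qed.

Lemma progs_comm k a b c d (x : M) : (1 <= a)%N -> (1 <= b)%N -> (1 <= c)%N -> (1 <= d)%N ->
  (a < c)%N -> (d < b)%N ->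
  run (progs k a b) (run (progs k c d) x) = run (progs k c d) (run (progs k a b) x).
Proof.
move=> ha hb hc hd h1 h2.
have [g1 d1] := progs_info k ha hb; have [g2 d2] := progs_info k hc hd.
apply: run_comm => //; apply: (far_diag d1 d2); lia.
Qed.

Lemma tau_eta_comm a b c d (x : M) : (1 <= c)%N -> (1 <= d)%N ->
  ((a < c) || ((a == c) && (b < d)))%N ->
  tau_ab a b (eta_ab c d x) = eta_ab c d (tau_ab a b x).
Proof.
move=> hc hd h.
have [g1 d1] := tau_prog_info a b; have [g2 d2] := eta_prog_info hc hd.
rewrite -!run_tau -!run_eta; apply: run_comm => //.
apply: (allp_imp d1) => t ht /=; split => //.
move: ht h; rewrite /diags /dist /=; case: t => [[p q] g] /=; lia.
Qed.

End Loc.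
Section Comb.
Variables (X : Type) (G : X -> nat * nat -> X).

Definition leP (p q : nat * nat) := ((p.1 <= q.1) && (p.2 <= q.2))%N.
Definition Rok (y z : nat * nat) := ~~ (leP z y && (z != y)).
Definition lexlt (p q : nat * nat) := ((p.1 < q.1) || ((p.1 == q.1) && (p.2 < q.2)))%N.

Lemma foldl_comm1 y s x :
  (forall z, z \in s -> forall x, G (G x y) z = G (G x z) y) ->
  foldl G (G x y) s = G (foldl G x s) y.
Proof.
elim: s x => //= z s IH x H.
rewrite H ?inE ?eqxx // IH // => w hw; apply: H; by rewrite inE hw orbT.
Qed.

Lemma foldl_perm t : forall s, uniq s -> perm_eq s t -> pairwise Rok s -> pairwise Rok t ->
  (forall p q, p \in s -> q \in s -> ~~ leP p q -> ~~ leP q p ->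
     forall x, G (G x p) q = G (G x q) p) ->
  forall x, foldl G x s = foldl G x t.
Proof.
elim: t => [|y t IH] s us pst ps pt H x.
  by move: pst => /perm_size /= /size0nil ->.
have ys : y \in s by rewrite (perm_mem pst) inE eqxx.
move: us pst ps H; case/splitPr: ys => s1 s2 us pst ps H.
have pst' : perm_eq (s1 ++ s2) t.
  by rewrite -(perm_cons y); apply: perm_trans pst; rewrite perm_sym (perm_catCA s1 [:: y] s2).
have us' : uniq (s1 ++ s2).
  by move: us; rewrite (perm_uniq (permEl (perm_catCA s1 [:: y] s2))) /= => /andP[].
have ps' : pairwise Rok (s1 ++ s2).
  by apply: subseq_pairwise ps; apply: cat_subseq => //; apply: subseq_cons.
have H' : forall p q, p \in s1 ++ s2 -> q \in s1 ++ s2 -> ~~ leP p q -> ~~ leP q p ->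
     forall x, G (G x p) q = G (G x q) p.
  move=> p q hp hq; apply: H; [move: hp|move: hq]; rewrite !mem_cat !inE => /orP[]->; by rewrite ?orbT.
rewrite foldl_cat /= -foldl_comm1; last first.
  move=> z hz x'; symmetry; apply: H.
  - by rewrite mem_cat hz.
  - by rewrite mem_cat inE eqxx orbT.
  - have zt : z \in t.
      rewrite -(perm_mem pst') mem_cat hz //.
    move: pt => /= /andP[/allP/(_ z zt)]; rewrite /Rok negb_and negbK.
    case/orP => // /eqP ezy; move: us; rewrite cat_uniq => /and3P[_ /hasPn/(_ y)].
    by rewrite inE eqxx -ezy hz => /(_ isT).
  - move: ps; rewrite pairwise_cat => /and3P[/allrelP A _ _].
    have := A z y hz; rewrite inE eqxx => /(_ isT); rewrite /Rok negb_and negbK.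
    case/orP => // /eqP eyz; move: us; rewrite cat_uniq => /and3P[_ /hasPn/(_ y)].
    by rewrite inE eqxx eyz hz => /(_ isT).
rewrite -foldl_cat /=; apply: IH => //; by move: pt => /= /andP[].
Qed.

Variables (E T : nat * nat -> X -> X).

Lemma foldl_split L : pairwise lexlt L ->
  (forall p q, p \in L -> q \in L -> lexlt p q -> forall x, T p (E q x) = E q (T p x)) ->
  forall x, foldl (fun y p => T p (E p y)) x L =
            foldl (fun y p => T p y) (foldl (fun y p => E p y) x L) L.
Proof.
elim: L => //= p L IH /andP[pa pL] H x.
rewrite IH //; last by move=> a b ha hb; apply: H; rewrite inE ?ha ?hb orbT.
congr foldl; move: (E p x); move: pa H {IH pL}; elim: L => //= q L IH' /andP[hq hL] H z.
rewrite -H ?inE ?eqxx ?orbT //; apply: IH' => // a b; rewrite !inE.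
move=> /orP[/eqP->|ha] /orP[/eqP->|hb]; apply: H; by rewrite !inE ?eqxx ?ha ?hb ?orbT.
Qed.

End Comb.

Lemma pw_allpairs (s t : seq nat) : pairwise ltn s -> pairwise ltn t ->
  pairwise lexlt [seq (a, b) | a <- s, b <- t].
Proof.
elim: s => //= a s IH /andP[ha hs] ht.
rewrite ?allpairs_cons pairwise_cat; apply/and3P; split; last exact: IH.
- apply/allrelP => p q /mapP[b hb ->] /allpairsP[[c d] /= [hc hd ->]].
  by rewrite /lexlt /= (allP ha c hc : (a < c)%N).
- rewrite pairwise_map; apply: sub_pairwise ht => b d /= h; by rewrite /lexlt /= eqxx h orbT.
Qed.

Lemma pw_iota k l : pairwise ltn (iota k l).
Proof. rewrite -sorted_pairwise; [exact: iota_ltn_sorted | exact: ltn_trans]. Qed.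

Lemma pw_rowmajor m n : pairwise lexlt (rowmajor m n).
Proof. exact: pw_allpairs (pw_iota _ _) (pw_iota _ _). Qed.

Lemma rowmajor_pos m n p : p \in rowmajor m n -> (1 <= p.1)%N /\ (1 <= p.2)%N.
Proof.
case/allpairsP => [[a b] /= [ha hb ->]] /=; move: ha hb; rewrite !mem_iota; lia.
Qed.

Lemma rowmajor_uniq m n : uniq (rowmajor m n).
Proof.
apply: pairwise_uniq (pw_rowmajor m n) => p; rewrite /lexlt ltnn eqxx /= ltnn //.
Qed.

Lemma le_ok m n s : linear_extension m n s -> pairwise Rok s.
Proof.
case=> _ H; apply/(pairwiseP (0, 0)%N) => i j hi hj lij.
rewrite /Rok; apply/negP => /andP[hle hne].
move: hle => /andP[h1 h2].
have := H j i hj hi h1 h2 hne; lia.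
Qed.

Lemma compose_along_ext (K : fieldType) m n (f g : nat -> nat -> 'M[K]_(m, n) -> 'M[K]_(m, n))
  (H : forall a b x, f a b x = g a b x) s x : compose_along f s x = compose_along g s x.
Proof. rewrite /compose_along; elim: s x => //= p s IH x; by rewrite H IH. Qed.

Lemma part1 (K : fieldType) m n k s (x : 'M[K]_(m, n)) : linear_extension m n s ->
  compose_along (fun a b => run (progs K m n k a b)) s x =
  compose_along (fun a b => run (progs K m n k a b)) (rowmajor m n) x.
Proof.
move=> hle; have [ps _] := hle.
apply: foldl_perm => //.
- by rewrite (perm_uniq ps) rowmajor_uniq.
- exact: le_ok hle.
- apply: sub_pairwise (pw_rowmajor m n) => p q; rewrite /lexlt /Rok /leP.
  case: p q => [a b] [c d] /=; rewrite xpair_eqE; case: (eqVneq a c) => [->|]; lia.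
- move=> [a b] [c d] hp hq; move: hp hq; rewrite !(perm_mem ps) => hp hq.
  have [ha hb] := rowmajor_pos hp; have [hc hd] := rowmajor_pos hq.
  rewrite /leP /= => h1 h2 y.
  have [lt1|lt1] := ltnP a c.
    have lt2 : (d < b)%N by lia.
    by symmetry; apply: progs_comm.
  have lt3 : (c < a)%N by lia.
  have lt2 : (b < d)%N by lia.
  by apply: progs_comm.
Qed.

Theorem lemma4p4 (m n : nat) :
  (forall s : seq (nat * nat), linear_extension m n s ->
     [/\ compose_along (@rho_ab _ m n) s (generic_matrix m n)
           = rho_map (generic_matrix m n),
         compose_along (@eta_ab _ m n) s (generic_matrix m n)
           = eta_map (generic_matrix m n)
       & compose_along (@tau_ab _ m n) s (generic_matrix m n)
           = tau_map (generic_matrix m n)]) /\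
  rho_map (generic_matrix m n)
    = tau_map (eta_map (generic_matrix m n)).
Proof.
split.
  move=> s hs.
  have E0 : forall a b (x : 'M[ratfun m n]_(m, n)), rho_ab a b x = run (progs _ m n 0 a b) x.
    by move=> a b x; symmetry; exact: run_rho.
  have E1 : forall a b (x : 'M[ratfun m n]_(m, n)), eta_ab a b x = run (progs _ m n 1 a b) x.
    by [].
  have E2 : forall a b (x : 'M[ratfun m n]_(m, n)), tau_ab a b x = run (progs _ m n 2 a b) x.
    by move=> a b x; symmetry; exact: run_tau.
  split.
  - by rewrite /rho_map !(compose_along_ext E0); apply: part1.
  - by rewrite /eta_map !(compose_along_ext E1); apply: part1.
  - by rewrite /tau_map !(compose_along_ext E2); apply: part1.
rewrite /rho_map /tau_map /eta_map /compose_along.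
apply: (@foldl_split _ (fun p => @eta_ab _ m n p.1 p.2) (fun p => @tau_ab _ m n p.1 p.2)).
  exact: pw_rowmajor.
move=> [a b] [c d] _ hq hl y /=; have [hc hd] := rowmajor_pos hq.
exact: tau_eta_comm.
Qed.
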